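(* Let $R$ be a ring and $(A_{i,r})$ a double complex of $R$-modules with all columns exact, and form its total complex with respect to $\Sigma=\prod$ (so $A_n=\prod_i A_{i,n-i}$). Then for each $n$ there is a short exact sequence $$0\to\operatorname{PB}(H^{\mathrm{tot}}(A_n))\to H^{\mathrm{tot}}(A_n)\to\varprojlim_{i\to\infty}(A_{i,n-i})_\square\to 0,$$ where the inverse limit is over the system with maps $(A_{i+1,n-i-1})_\square\to(A_{i,n-i})_\square$ given by $\bar\delta_1^{-1}\circ\bar\delta_2$, with $\bar\delta_2:(A_{i+1,n-i-1})_\square\to{}^\square A_{i+1,n-i}$ the extramural map of the horizontal arrow $A_{i+1,n-i-1}\to A_{i+1,n-i}$ and $\bar\delta_1:(A_{i,n-i})_\square\to{}^\square A_{i+1,n-i}$ the extramural map of the vertical arrow $A_{i,n-i}\to A_{i+1,n-i}$ (an isomorphism). This inverse limit is also isomorphic to the inverse limit of the corresponding system of receptors ${}^\square A_{i,n-i+1}$, and to $\ker(\bar\delta:A_{n\square}\to{}^\square A_{n+1})$; and $\operatorname{PB}(H^{\mathrm{tot}}(A_n))$ equals the image of the intramural map ${}^\square A_n\to H^{\mathrm{tot}}(A_n)$, isomorphic to $\operatorname{coker}(\bar\delta:A_{n-1\,\square}\to{}^\square A_n)$.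
   Context: A double complex of $R$-modules is a family $A_{i,r}$ $(i,r\in\mathbb{Z})$ ($i$ = row index increasing downward, $r$ = column index increasing rightward) with vertical maps $\delta_1:A_{i,r}\to A_{i+1,r}$ and horizontal maps $\delta_2:A_{i,r}\to A_{i,r+1}$, $\delta_1\delta_1=0$, $\delta_2\delta_2=0$, $\delta_1\delta_2=\delta_2\delta_1$. For an object $A$, with $d,e$ the horizontal maps into/out of $A$, $c,f$ the vertical maps into/out of $A$, $p$ the composite of two arrows ending at $A$, $q$ the composite of two arrows starting at $A$: receptor ${}^\square A=(\ker e\cap\ker f)/\operatorname{im}p$, donor $A_\square=\ker q/(\operatorname{im}c+\operatorname{im}d)$; an arrow $A\to B$ induces the ''extramural'' map $A_\square\to{}^\square B$. Total complex: $A_n=\prod_i A_{i,n-i}$, $\delta=\delta_2+(-1)^n\delta_1:A_n\to A_{n+1}$ (computed componentwise), $H^{\mathrm{tot}}(A_n)=\ker\delta/\operatorname{im}\delta$. $A_{n\square}=\prod_i(A_{i,n-i})_\square$, ${}^\square A_n=\prod_i{}^\square A_{i,n-i}$; $\bar\delta_1,\bar\delta_2:A_{n\square}\to{}^\square A_{n+1}$ are the products of the extramural maps of vertical, respectively horizontal, arrows; $\bar\delta=\bar\delta_2+(-1)^n\bar\delta_1$; the intramural map ${}^\square A_n\to H^{\mathrm{tot}}(A_n)$ is induced by the identity of $A_n$. An element $x\in H^{\mathrm{tot}}(A_n)$ is a ''peekaboo element'' if for every finite set $I\subseteq\mathbb{Z}$, $x$ is represented by a cycle $(x_i)\in A_n$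 with $x_i=0$ for all $i\in I$; these form a submodule $\operatorname{PB}(H^{\mathrm{tot}}(A_n))$. *)

(* Defs.v *)
From HB Require Import structures.
From mathcomp Require Import all_boot all_order all_algebra.
Set Implicit Arguments. Unset Strict Implicit. Unset Printing Implicit Defensive.
Import Order.TTheory GRing.Theory Num.Theory.
Local Open Scope ring_scope.

(* A double complex of R-modules: A i r, i = row (downward), r = column
   (rightward); dv : A i r -> A (i+1) r (delta_1), dh : A i r -> A i (r+1)
   (delta_2). *)
Record dcomplex (R : pzRingType) := DComplex {
  dobj : int -> int -> lmodType R;
  dv : forall i r, {linear dobj i r -> dobj (i + 1) r};
  dh : forall i r, {linear dobj i r -> dobj i (r + 1)};
  dvv : forall i r (x : dobj i r), dv (i + 1) r (dv i r x) = 0;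
  dhh : forall i r (x : dobj i r), dh i (r + 1) (dh i r x) = 0;
  dvh : forall i r (x : dobj i r), dv i (r + 1) (dh i r x) = dh (i + 1) r (dv i r x)
}.
Arguments dobj {R} d.
Arguments dv {R} d i r.
Arguments dh {R} d i r.

Section DoubleComplex.
Variable R : pzRingType.
Variable D : dcomplex R.
Local Notation A := (dobj D).
Local Notation dv := (dv D).
Local Notation dh := (dh D).

Definition columns_exact : Prop :=
  forall i r (x : A (i + 1) r), dv (i + 1) r x = 0 -> exists y : A i r, dv i r y = x.

Definition sgn (n : int) : R := (-1) ^+ `|n|%N.

(* Ambient type: families indexed by all positions (i,r).  An element of the
   product  prod_i A_{i,m-i}  (degree m) is represented by such a family, only
   its values on the diagonal  i + r = m  being relevant. *)
Definition chain := forall i r, A i r.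
Definition cadd (x y : chain) : chain := fun i r => x i r + y i r.
Definition copp (x : chain) : chain := fun i r => - x i r.
Definition csub (x y : chain) : chain := cadd x (copp y).
Definition cscale (a : R) (x : chain) : chain := fun i r => a *: x i r.

(* Receptor  ^[]A = (ker e /\ ker f) / im p  at position (i,r) (cycles), and
   im p at position (i+1,r+1) (p : A i r -> A (i+1) (r+1) the diagonal). *)
Definition recK i r (x : A i r) : Prop := dh i r x = 0 /\ dv i r x = 0.
Definition recI i r (x : A (i + 1) (r + 1)) : Prop :=
  exists y : A i r, dh (i + 1) r (dv i r y) = x.
Arguments recI : clear implicits.
(* Donor  A_[] = ker q / (im c + im d) : ker q at (i,r), im c + im d at (i+1,r+1). *)
Definition donK i r (x : A i r) : Prop := dh (i + 1) r (dv i r x) = 0.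
Definition donI i r (x : A (i + 1) (r + 1)) : Prop :=
  exists (y : A i (r + 1)) (z : A (i + 1) r), x = dv i (r + 1) y + dh (i + 1) r z.
Arguments donI : clear implicits.

Definition prodRecK (m : int) (w : chain) := forall i r, i + r = m -> recK (w i r).
Definition prodRecI (m : int) (w : chain) :=
  forall i r, (i + 1) + (r + 1) = m -> recI i r (w (i + 1) (r + 1)).
Definition prodDonK (m : int) (w : chain) := forall i r, i + r = m -> donK (w i r).
Definition prodDonI (m : int) (w : chain) :=
  forall i r, (i + 1) + (r + 1) = m -> donI i r (w (i + 1) (r + 1)).

(* The differential delta = delta_2 + (-1)^m delta_1 of degree m, component at
   position (i+1,r+1) (with (i+1)+r = m).  The same formula on representatives
   gives the map  bar-delta : A_{m[]} -> ^[]A_{m+1}. *)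
Definition tdiff m (u : chain) i r : A (i + 1) (r + 1) :=
  dh (i + 1) r (u (i + 1) r) + sgn m *: dv i (r + 1) (u i (r + 1)).
Arguments tdiff : clear implicits.

(* Total cycles and boundaries in degree n;  H^tot(A_n) = totZ n / totB n. *)
Definition totZ n (x : chain) : Prop :=
  forall i r, (i + 1) + r = n -> tdiff n x i r = 0.
Definition totB n (x : chain) : Prop :=
  exists y : chain, forall i r, (i + 1) + (r + 1) = n ->
    x (i + 1) (r + 1) = tdiff (n - 1) y i r.

Definition peekaboo n (x : chain) : Prop :=
  totZ n x /\
  forall I : seq int, exists x' : chain,
    [/\ totZ n x', totB n (csub x' x) &
        forall i r, i + r = n -> i \in I -> x' i r = 0].

(* inverse limit over i of (A_{i,n-i})_[] along bar-delta_1^{-1} o bar-delta_2: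
   compatible families  bar-delta_2 [u_{i+1}] = bar-delta_1 [u_i]. *)
Definition limK n (u : chain) : Prop :=
  prodDonK n u /\
  forall i r, (i + 1) + r = n ->
    recI i r (dh (i + 1) r (u (i + 1) r) - dv i (r + 1) (u i (r + 1))).
Definition limI n (u : chain) := prodDonI n u.

(* inverse limit over i of ^[]A_{i,n-i+1} along bar-delta_2 o bar-delta_1^{-1}. *)
Definition limRK n (w : chain) : Prop :=
  prodRecK (n + 1) w /\
  forall i r, (i + 1) + (r + 1) = n ->
    exists v : A (i + 1) (r + 1),
      [/\ donK v,
          recI (i + 1) r (w (i + 1 + 1) (r + 1) - dv (i + 1) (r + 1) v) &
          recI i (r + 1) (w (i + 1) (r + 1 + 1) - dh (i + 1) (r + 1) v)].
Definition limRI n (w : chain) := prodRecI (n + 1) w.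

(* ker (bar-delta : A_{n[]} -> ^[]A_{n+1}) *)
Definition kerK n (u : chain) : Prop :=
  prodDonK n u /\ forall i r, (i + 1) + r = n -> recI i r (tdiff n u i r).
Definition kerI n (u : chain) := prodDonI n u.

(* coker (bar-delta : A_{n-1 []} -> ^[]A_n) *)
Definition cokK n (w : chain) := prodRecK n w.
Definition cokI n (w : chain) : Prop :=
  exists u : chain, prodDonK (n - 1) u /\
    forall i r, (i + 1) + (r + 1) = n ->
      recI i r (w (i + 1) (r + 1) - tdiff (n - 1) u i r).

(* Module homomorphisms / isomorphisms between subquotients K1/I1 -> K2/I2
   of the ambient module, given on representatives. *)
Definition sq_hom (K1 I1 K2 I2 : chain -> Prop) (f : chain -> chain) : Prop :=
  [/\ forall x, K1 x -> K2 (f x),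
      forall x y, K1 x -> K1 y -> I2 (csub (f (cadd x y)) (cadd (f x) (f y))),
      forall a x, K1 x -> I2 (csub (f (cscale a x)) (cscale a (f x))) &
      forall x, K1 x -> I1 x -> I2 (f x)].
Definition sq_surj (K1 K2 I2 : chain -> Prop) (f : chain -> chain) : Prop :=
  forall y, K2 y -> exists x, K1 x /\ I2 (csub (f x) y).
Definition sq_iso (K1 I1 K2 I2 : chain -> Prop) (f : chain -> chain) : Prop :=
  [/\ sq_hom K1 I1 K2 I2 f,
      forall x, K1 x -> I2 (f x) -> I1 x &
      sq_surj K1 K2 I2 f].

End DoubleComplex.

Arguments recI {R D} i r x.
Arguments donI {R D} i r x.
Arguments tdiff {R D} m u i r.
Arguments totZ {R} D _ _.
Arguments totB {R} D _ _.
Arguments peekaboo {R} D _ _.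
Arguments limK {R} D _ _.
Arguments limI {R} D _ _.
Arguments limRK {R} D _ _.
Arguments limRI {R} D _ _.
Arguments kerK {R} D _ _.
Arguments kerI {R} D _ _.
Arguments cokK {R} D _ _.
Arguments cokI {R} D _ _.
Arguments prodRecK {R} D _ _.
Arguments prodRecI {R} D _ _.
Arguments prodDonK {R} D _ _.
Arguments prodDonI {R} D _ _.

(* Main.v *)
Require Import Defs.
From HB Require Import structures.
From mathcomp Require Import all_boot all_order all_algebra zify.
From Stdlib Require Import ClassicalEpsilon.
Import GRing.Theory.
Local Open Scope ring_scope.
Set Implicit Arguments. Unset Strict Implicit. Unset Printing Implicit Defensive.

Lemma zl2 (V : zmodType) (a b c : V) : (c - b) - (c - a) = a - b.
Proof. by rewrite opprB addrC addrA subrK. Qed.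
Lemma zl (V : zmodType) (a b c w : V) : a - b = (w - b) - (w - c) - (c - a).
Proof. by rewrite zl2 zl2. Qed.

Lemma oddS (m : int) : odd (absz (m + 1)) = ~~ odd (absz m).
Proof.
case: m => k.
  by rewrite -PoszD absz_nat addn1 /=.
rewrite NegzE.
have -> : - (k.+1)%:Z + 1 = - k%:Z.
  by rewrite -addn1 PoszD opprD addrK.
by rewrite !abszN !absz_nat /= negbK.
Qed.

Lemma oddB1 (m : int) : odd (absz (m - 1)) = ~~ odd (absz m).
Proof. by rewrite -{2}(subrK 1 m) oddS negbK. Qed.

Lemma ex_pred (i : int) : exists j, i = j + 1.
Proof. by exists (i - 1); rewrite subrK. Qed.

Lemma choice2 (T : int -> int -> Type) (P : forall i r, T i r -> Prop) :
  (forall i r, exists y, P i r y) -> exists f : forall i r, T i r, forall i r, P i r (f i r).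
Proof.
move=> H.
exists (fun i r => proj1_sig (constructive_indefinite_description _ (H i r))).
move=> i r; exact: (proj2_sig (constructive_indefinite_description _ (H i r))).
Qed.

Section S.
Variable R : pzRingType.
Variable D : dcomplex R.
Local Notation A := (dobj D).
Local Notation dV := (dv D).
Local Notation dH := (dh D).
Local Notation chain := (chain D).

Lemma sgnE (m : int) : sgn R m = if odd (absz m) then -1 else 1.
Proof. by rewrite /sgn -signr_odd; case: odd; rewrite ?expr0 ?expr1. Qed.

Lemma sgnB1 (m : int) : sgn R (m - 1) = - sgn R m.
Proof. by rewrite !sgnE oddB1; case: odd; rewrite ?opprK. Qed.

Lemma dHZ i r (a : R) (v : A i r) : dH i r (a *: v) = a *: dH i r v.
Proof. exact: linearZ_LR. Qed.
Lemma dVZ i r (a : R) (v : A i r) : dV i r (a *: v) = a *: dV i r v.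
Proof. exact: linearZ_LR. Qed.
Lemma dHD i r (u v : A i r) : dH i r (u + v) = dH i r u + dH i r v.
Proof. exact: raddfD. Qed.
Lemma dVD i r (u v : A i r) : dV i r (u + v) = dV i r u + dV i r v.
Proof. exact: raddfD. Qed.
Lemma dHB i r (u v : A i r) : dH i r (u - v) = dH i r u - dH i r v.
Proof. exact: raddfB. Qed.
Lemma dVB i r (u v : A i r) : dV i r (u - v) = dV i r u - dV i r v.
Proof. exact: raddfB. Qed.
Lemma dHN i r (u : A i r) : dH i r (- u) = - dH i r u.
Proof. exact: raddfN. Qed.
Lemma dVN i r (u : A i r) : dV i r (- u) = - dV i r u.
Proof. exact: raddfN. Qed.
Lemma dH0 i r : dH i r 0 = 0.
Proof. exact: raddf0. Qed.
Lemma dV0 i r : dV i r 0 = 0.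
Proof. exact: raddf0. Qed.
Definition dE := (dHZ, dVZ, dHD, dVD, dHN, dVN, dH0, dV0).

Definition castA i i' r r' (ei : i = i') (er : r = r') (x : A i r) : A i' r' :=
  eq_rect r (fun r => A i' r) (eq_rect i (fun i => A i r) x i' ei) r' er.

Definition shift2 (G : forall i r, A (i + 1) (r + 1)) : chain :=
  fun i r => castA (subrK 1 i) (subrK 1 r) (G (i - 1) (r - 1)).

Lemma shift2E G i r : shift2 G (i + 1) (r + 1) = G i r.
Proof.
rewrite /shift2; move: (subrK 1 (i + 1)) (subrK 1 (r + 1)).
rewrite (addrK 1 i) (addrK 1 r) => e1 e2.
by rewrite (eq_irrelevance e1 erefl) (eq_irrelevance e2 erefl).
Qed.

Definition single i0 r0 (a : A i0 r0) : chain := fun i r =>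
  match i0 =P i with
  | ReflectT ei => match r0 =P r with ReflectT er => castA ei er a | ReflectF _ => 0 end
  | ReflectF _ => 0 end.

Lemma single_id i0 r0 (a : A i0 r0) : single a i0 r0 = a.
Proof.
rewrite /single; case: eqP => [ei|//]; case: eqP => [er|//].
by rewrite (eq_irrelevance ei erefl) (eq_irrelevance er erefl).
Qed.

Lemma single_neq i0 r0 (a : A i0 r0) i r : i <> i0 -> single a i r = 0.
Proof. by move=> ne; rewrite /single; case: eqP => // e; case: ne. Qed.


Lemma recI0 i r : recI (D:=D) i r 0.
Proof. by exists 0; rewrite !raddf0. Qed.
Lemma recID i r x y : recI (D:=D) i r x -> recI i r y -> recI i r (x + y).
Proof. by move=> [a <-] [b <-]; exists (a + b); rewrite !raddfD. Qed.
Lemma recIN i r x : recI (D:=D) i r x -> recI i r (- x).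
Proof. by move=> [a <-]; exists (- a); rewrite !raddfN. Qed.
Lemma recIB i r x y : recI (D:=D) i r x -> recI i r y -> recI i r (x - y).
Proof. by move=> hx hy; apply: recID => //; apply: recIN. Qed.
Lemma recI_eq i r x y : x = y -> recI (D:=D) i r y -> recI i r x.
Proof. by move=> ->. Qed.

Lemma donI0 i r : donI (D:=D) i r 0.
Proof. by exists 0, 0; rewrite !raddf0 addr0. Qed.
Lemma donID i r x y : donI (D:=D) i r x -> donI i r y -> donI i r (x + y).
Proof.
move=> [a [b ->]] [c [d ->]]; exists (a + c), (b + d).
by rewrite !raddfD addrACA.
Qed.
Lemma donIN i r x : donI (D:=D) i r x -> donI i r (- x).
Proof. by move=> [a [b ->]]; exists (- a), (- b); rewrite !raddfN opprD. Qed.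

Lemma donKN i r (x : A i r) : donK x -> donK (- x).
Proof. rewrite /donK !raddfN => h; apply/eqP; rewrite oppr_eq0; apply/eqP; exact: h. Qed.
Lemma donKD i r (x y : A i r) : donK x -> donK y -> donK (x + y).
Proof. rewrite /donK !raddfD => h1 h2; apply/eqP; rewrite -[0]addr0; apply/eqP; congr (_ + _); [exact: h1|exact: h2]. Qed.
Lemma recKN i r (x : A i r) : recK x -> recK (- x).
Proof. rewrite /recK !raddfN => -[h1 h2]; split; apply/eqP; rewrite oppr_eq0; apply/eqP; [exact: h1|exact: h2]. Qed.

Definition tw (n : int) (x : chain) : chain := fun i r =>
  if ~~ odd (absz n) && odd (absz i) then - x i r else x i r.

Lemma twK n x i r : tw n (tw n x) i r = x i r.
Proof. by rewrite /tw; case: ifP => h; rewrite h ?opprK. Qed.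

Lemma tw_closed n (P : forall i r, A i r -> Prop)
  (HP : forall i r y, P i r y -> P i r (- y)) x i r :
  P i r (tw n x i r) <-> P i r (x i r).
Proof.
rewrite /tw; case: ifP => // _; split => h; last exact: HP.
by rewrite -(opprK (x i r)); apply: HP.
Qed.

Lemma tw_diff n x i r :
  dH (i + 1) r (tw n x (i + 1) r) - dV i (r + 1) (tw n x i (r + 1)) = tdiff n x i r \/
  dH (i + 1) r (tw n x (i + 1) r) - dV i (r + 1) (tw n x i (r + 1)) = - tdiff n x i r.
Proof.
rewrite /tw /tdiff sgnE oddS; case: (odd (absz n)); case: (odd (absz i)) => /=;
  rewrite ?raddfN ?scaleN1r ?scale1r ?opprK ?opprD; by [left | right].
Qed.


Definition bnd m (Y : chain) : chain := shift2 (fun i r => tdiff m Y i r).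
Lemma bndE m Y i r : bnd m Y (i + 1) (r + 1) = tdiff m Y i r.
Proof. by rewrite /bnd shift2E. Qed.

Lemma totB_bnd n Y : totB D n (bnd (n - 1) Y).
Proof. by exists Y => i r _; rewrite bndE. Qed.
Lemma totB_ext n x x' : totB D n x -> (forall i r, x' i r = x i r) -> totB D n x'.
Proof. by move=> [Y hY] e; exists Y => i r h; rewrite e hY. Qed.
Lemma totB_add n x y : totB D n x -> totB D n y -> totB D n (cadd x y).
Proof.
move=> [Y hY] [Z hZ]; exists (cadd Y Z) => i r h.
by rewrite /cadd hY // hZ // /tdiff /cadd /= !(raddfD (dH _ _)) !(raddfD (dV _ _)) scalerDr addrACA.
Qed.
Lemma totB_opp n x : totB D n x -> totB D n (copp x).
Proof.
move=> [Y hY]; exists (copp Y) => i r h.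
by rewrite /copp hY // /tdiff /copp /= !(raddfN (dH _ _)) !(raddfN (dV _ _)) scalerN opprD.
Qed.
Lemma totB_zero n x : (forall i r, x i r = 0) -> totB D n x.
Proof.
move=> h; exists (fun _ _ => 0) => i r _.
by rewrite h /tdiff /= !raddf0 addr0.
Qed.

Lemma totZ_ext n x x' : totZ D n x -> (forall i r, x' i r = x i r) -> totZ D n x'.
Proof. by move=> hx e i r h; rewrite /tdiff !e; apply: hx. Qed.
Lemma totZ_add n x y : totZ D n x -> totZ D n y -> totZ D n (cadd x y).
Proof.
move=> hx hy i r h; move: (hx i r h) (hy i r h).
rewrite /tdiff /cadd !(raddfD (dH _ _)) !(raddfD (dV _ _)) scalerDr addrACA => -> ->; exact: addr0.
Qed.
Lemma totZ_opp n x : totZ D n x -> totZ D n (copp x).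
Proof.
move=> hx i r h; move: (hx i r h).
rewrite /tdiff /copp !(raddfN (dH _ _)) !(raddfN (dV _ _)) scalerN -opprD => ->; exact: oppr0.
Qed.

Lemma totZ_bnd n Y : totZ D n (bnd (n - 1) Y).
Proof.
move=> i r h; have [r0 Er] := ex_pred r; have [i0 Ei] := ex_pred i; subst i r.
rewrite /tdiff !bndE /tdiff !dE dhh dvv dvh sgnB1.
by rewrite scaler0 add0r addr0 scaleNr addNr.
Qed.


Variable hcol : columns_exact D.

Lemma p1a i r (x : A (i + 1) (r + 1)) :
  recI (i + 1) r (dV (i + 1) (r + 1) x) -> donI i r x.
Proof.
move=> [y hy].
have h0 : dV (i + 1) (r + 1) (x - dH (i + 1) r y) = 0.
  by rewrite dVB dvh hy subrr.
have [z hz] := hcol h0.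
by exists z, y; rewrite hz subrK.
Qed.

Lemma p1b i r (w : A (i + 1 + 1) (r + 1)) : recK w ->
  exists x : A (i + 1) (r + 1), donK x /\ recI (i + 1) r (w - dV (i + 1) (r + 1) x).
Proof.
move=> [hh hv]; have [x hx] := hcol hv.
exists x; split; first by rewrite /donK hx.
by rewrite hx subrr; apply: recI0.
Qed.

Lemma cycleE n x i r : totZ D n x -> (i + 1) + r = n ->
  dH (i + 1) r (x (i + 1) r) = - (sgn R n *: dV i (r + 1) (x i (r + 1))).
Proof. by move=> hz h; apply/eqP; rewrite -addr_eq0; apply/eqP; apply: hz. Qed.

Lemma tdiff_donI m Y i r : donI (D:=D) i r (tdiff m Y i r).
Proof. by exists (sgn R m *: Y i (r + 1)), (Y (i + 1) r); rewrite dVZ /tdiff; apply: addrC. Qed.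

Lemma totB_limI n x : totB D n x -> limI D n x.
Proof. by move=> [Y hY] i r h; rewrite hY //; apply: tdiff_donI. Qed.

Lemma peek_limI n x : peekaboo D n x -> limI D n x.
Proof.
move=> [hz hp] i r h.
have [x' [hz' [Y hY] hv]] := hp [:: i + 1].
have e : x (i + 1) (r + 1) = - tdiff (n - 1) Y i r.
  move: (hY i r h); rewrite /csub /cadd /copp hv //; last by rewrite mem_seq1.
  by rewrite add0r => <-; rewrite opprK.
by rewrite e; apply: donIN; apply: tdiff_donI.
Qed.


Lemma int_neq1 (i : int) : i + 1 <> i.
Proof. lia. Qed.

Lemma kill_step n x i r : totZ D n x -> (i + 1) + r = n ->
  dV (i + 1) r (x (i + 1) r) = 0 -> dV i (r + 1) (x i (r + 1)) = 0 ->
  exists x', [/\ totZ D n x', totB D n (csub x' x), x' (i + 1) r = 0,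
    dV i (r + 1) (x' i (r + 1)) = 0 &
    forall j s, j <> i -> j <> i + 1 -> x' j s = x j s].
Proof.
move=> hz h hv1 hv2.
have [c hc] := hcol hv1.
pose Y := single (sgn R (n - 1) *: c).
exists (csub x (bnd (n - 1) Y)); split.
- by apply: totZ_add => //; apply: totZ_opp; apply: totZ_bnd.
- apply: (totB_ext (totB_opp (totB_bnd n Y))) => j s.
  by rewrite /csub /cadd /copp addrAC subrr add0r.
- have [r0 Er] := ex_pred r; subst r.
  rewrite /csub /cadd /copp bndE /tdiff /Y single_neq; last exact: int_neq1.
  rewrite single_id dH0 add0r dVZ scalerA sgnB1 mulrNN.
  rewrite /sgn -exprD -signr_odd addnn odd_double expr0 scale1r hc.
  exact: subrr.
- have [i0 Ei] := ex_pred i; subst i.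
  rewrite /csub /cadd /copp bndE /tdiff /Y single_id single_neq; last by lia.
  rewrite !dE scaler0 addr0 hv2 add0r dvh hc.
  by rewrite (cycleE hz h) hv2 scaler0 oppr0 scaler0 oppr0.
- move=> j s nj nj1.
  have [j0 Ej] := ex_pred j; have [s0 Es] := ex_pred s; subst j s.
  rewrite /csub /cadd /copp bndE /tdiff /Y !single_neq; try lia.
  by rewrite dH0 dV0 scaler0 addr0 oppr0 addr0.
Qed.


Lemma kill_iter n M (k : nat) x : totZ D n x ->
  (forall j s, j + s = n -> j <= M -> dV j s (x j s) = 0) ->
  exists x', [/\ totZ D n x', totB D n (csub x' x),
     (forall j s, j + s = n -> M - k%:Z < j <= M -> x' j s = 0) &
     (forall j s, j + s = n -> j <= M - k%:Z -> dV j s (x' j s) = 0)].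
Proof.
move=> hz hv; elim: k => [|k [x1 [hz1 hb1 h01 hv1]]].
  exists x; split => //.
  - by apply: totB_zero => i r; rewrite /csub /cadd /copp subrr.
  - by move=> j s _ /andP[]; lia.
  - by move=> j s e hj; apply: hv => //; lia.
have [i Ei] : exists i, i = M - k%:Z - 1 by eexists.
have [r Er] : exists r, r = n - (M - k%:Z) by eexists.
have hir : (i + 1) + r = n by lia.
have [x2 [hz2 hb2 h02 hv2 heq]] := kill_step hz1 hir
  (hv1 (i + 1) r hir (ltac:(lia)))
  (hv1 i (r + 1) (ltac:(lia)) (ltac:(lia))).
exists x2; split => //.
- apply: (totB_ext (totB_add hb2 hb1)) => j s.
  by rewrite /csub /cadd /copp addrA subrK.
- move=> j s e /andP[hj1 hj2].
  have [ej|nej] := eqVneq j (i + 1).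
    have es : s = r by lia.
    by subst j s.
  have nej' : j <> i + 1 by apply/eqP.
  rewrite heq //; last by lia.
  by apply: h01 => //; apply/andP; split; lia.
- move=> j s e hj.
  have [ej|nej] := eqVneq j i.
    have es : s = r + 1 by lia.
    by subst j s.
  have nej' : j <> i by apply/eqP.
  rewrite heq //; last by lia.
  by apply: hv1 => //; lia.
Qed.


Lemma recK_totZ n w : prodRecK D n w -> totZ D n w.
Proof.
move=> hw i r h; rewrite /tdiff.
have [h1 _] := hw (i + 1) r h.
have [_ h2] := hw i (r + 1) (ltac:(lia)).
by rewrite h1 h2 scaler0 addr0.
Qed.

Lemma mem_bound (I : seq int) i : i \in I ->
  (absz i <= foldr (fun j acc => absz j + acc) 0 I)%N.
Proof.
elim: I => //= a I IH; rewrite in_cons => /orP[/eqP->|/IH]; lia.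
Qed.

Lemma bicycle_peek n x w : totZ D n x -> prodRecK D n w ->
  totB D n (csub x w) -> peekaboo D n x.
Proof.
move=> hz hw hb; split => // I.
pose Mn := foldr (fun j acc => absz j + acc) 0%N I.
have [x' [hz' hb' h0 _]] := @kill_iter n Mn%:Z (2 * Mn + 1) w (recK_totZ hw)
  (fun j s e _ => proj2 (hw j s e)).
exists x'; split => //.
- apply: (totB_ext (totB_add hb' (totB_opp hb))) => j s.
  by rewrite /csub /cadd /copp opprB addrA subrK.
- move=> i r e hi; apply: h0 => //.
  by have := mem_bound hi; rewrite -/Mn => hb2; apply/andP; split; lia.
Qed.


Lemma limI_bicycle n x : totZ D n x -> limI D n x ->
  exists w, prodRecK D n w /\ totB D n (csub x w).
Proof.
move=> hz hl.
have Hex : forall i r, exists p : (A i (r + 1) * A (i + 1) r)%type,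
  (i + 1) + (r + 1) = n -> x (i + 1) (r + 1) = dV i (r + 1) p.1 + dH (i + 1) r p.2.
  move=> i r; have [e|ne] := eqVneq ((i + 1) + (r + 1)) n.
    have [b [a e']] := hl i r e.
    by exists (b, a) => _.
  by exists (0, 0) => e; rewrite e eqxx in ne.
have [ab hab] := choice2 Hex.
pose Y := shift2 (fun i r => sgn R (n - 1) *: (ab (i + 1) r).1).
exists (csub x (bnd (n - 1) Y)); split; last first.
  apply: (totB_ext (totB_bnd n Y)) => j s.
  by rewrite /csub /cadd /copp opprD opprK addrA subrr add0r.
move=> i r h.
have [i1 Ei] := ex_pred i; have [i2 Ei1] := ex_pred i1.
have [r1 Er] := ex_pred r; have [r2 Er1] := ex_pred r1.
subst i r i1 r1.
rewrite /csub /cadd /copp bndE /tdiff /Y !shift2E (hab (i2 + 1) (r2 + 1) h).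
have h2 := hab (i2 + 1 + 1) r2 (ltac:(lia)).
have hc := cycleE hz (ltac:(lia) : (i2 + 1 + 1 + 1) + (r2 + 1) = n).
rewrite h2 (hab _ _ h) !dE dhh dvv dvh addr0 add0r in hc.
split; rewrite !dE ?dhh ?dvv ?dvh ?hc sgnB1 !sgnE; case: (odd _);
  rewrite ?scaleN1r ?scale1r ?opprK ?scaleN1r ?scale1r ?opprK ?scaler0 ?oppr0 ?add0r ?addr0 ?subrr //.
Qed.


Lemma peek_iff n x : totZ D n x ->
  (peekaboo D n x <-> exists w, prodRecK D n w /\ totB D n (csub x w)).
Proof.
move=> hz; split.
  by move=> hp; apply: limI_bicycle => //; apply: peek_limI.
by move=> [w [hw hb]]; apply: (bicycle_peek hz hw hb).
Qed.

Lemma limI_peek n x : totZ D n x -> (limI D n x <-> peekaboo D n x).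
Proof.
move=> hz; split; last exact: peek_limI.
by move=> hl; have [w [hw hb]] := limI_bicycle hz hl; apply: (bicycle_peek hz hw hb).
Qed.

Lemma cycle_dV n x i r : totZ D n x -> (i + 1) + r = n ->
  dV i (r + 1) (x i (r + 1)) = - (sgn R n *: dH (i + 1) r (x (i + 1) r)).
Proof.
move=> hz h; have := cycleE hz h; rewrite !sgnE; case: (odd _);
  rewrite ?scaleN1r ?scale1r ?opprK => ->; by rewrite ?opprK.
Qed.

Lemma cycle_donK n x i r : totZ D n x -> i + r = n -> donK (x i r).
Proof.
move=> hz h; have [r0 Er] := ex_pred r; subst r.
by rewrite /donK (cycle_dV hz (ltac:(lia) : (i + 1) + r0 = n)) !dE dhh scaler0 oppr0.
Qed.

Lemma donI_tw m i r x : donI i r (tw m x (i + 1) (r + 1)) <-> donI i r (x (i + 1) (r + 1)).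
Proof.
rewrite /tw; case: ifP => // _; split; last exact: donIN.
by move/donIN; rewrite opprK.
Qed.

Lemma limI_tw n m x : limI D n (tw m x) <-> limI D n x.
Proof. by split => h i r e; have := h i r e; rewrite donI_tw. Qed.

Lemma limI_zero n u : (forall i r, u i r = 0) -> limI D n u.
Proof. by move=> h i r _; rewrite h; apply: donI0. Qed.

Lemma tdiff0 n x i r : 
  (dH (i + 1) r (tw n x (i + 1) r) - dV i (r + 1) (tw n x i (r + 1)) = 0) <-> tdiff n x i r = 0.
Proof.
by case: (tw_diff n x i r) => ->; split => // /eqP; rewrite ?oppr_eq0 => /eqP -> //; rewrite oppr0.
Qed.

Lemma part2 n : exists f : chain -> chain,
     [/\ sq_hom (totZ D n) (totB D n) (limK D n) (limI D n) f,
         sq_surj (totZ D n) (limK D n) (limI D n) f &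
         forall x, totZ D n x -> (limI D n (f x) <-> peekaboo D n x)].
Proof.
exists (tw n); split.
- split.
  + move=> x hz; split.
      move=> i r h; apply/(@tw_closed n (fun i r (y : A i r) => donK y) (@donKN)); exact: cycle_donK hz h.
    move=> i r h.
    have e := proj2 (tdiff0 n x i r) (hz i r h).
    by rewrite e; apply: recI0.
  + move=> x y _ _; apply: limI_zero => i r.
    rewrite /csub /cadd /copp; apply/eqP; rewrite subr_eq0; apply/eqP.
    by rewrite /tw /cadd; case: ifP => _ //; apply: opprD.
  + move=> a x _; apply: limI_zero => i r.
    rewrite /csub /cadd /copp; apply/eqP; rewrite subr_eq0; apply/eqP.
    by rewrite /tw /cscale; case: ifP => _ //; rewrite scalerN.
  + by move=> x _ hb; apply/limI_tw; apply: totB_limI.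
- move=> u [hdk hlim].
  have Hex : forall i r, exists y : A i r, (i + 1) + r = n ->
    dH (i + 1) r (dV i r y) = dH (i + 1) r (u (i + 1) r) - dV i (r + 1) (u i (r + 1)).
    move=> i r; have [e|ne] := eqVneq ((i + 1) + r) n.
      by have [y hy] := hlim i r e; exists y.
    by exists 0 => e; rewrite e eqxx in ne.
  have [y hy] := choice2 Hex.
  pose v := shift2 (fun i r => u (i + 1) (r + 1) + dH (i + 1) r (y (i + 1) r)).
  exists (tw n v); split.
    move=> i r h; apply/tdiff0.
    have [r0 Er] := ex_pred r; have [i0 Ei] := ex_pred i; subst i r.
    rewrite !twK /v !shift2E !dE dhh addr0 dvh (hy (i0 + 1) (r0 + 1) h).
    by rewrite addrCA subrr addr0 subrr.
  move=> i r _; rewrite /csub /cadd /copp twK /v shift2E addrAC subrr add0r.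
  by exists 0, (y (i + 1) r); rewrite dV0 add0r.
- by move=> x hz; rewrite limI_tw; apply: limI_peek.
Qed.


Lemma recI_pm i r (X T : A (i + 1) (r + 1)) :
  X = T \/ X = - T -> recI i r T -> recI i r X.
Proof. by case=> -> h //; apply: recIN. Qed.

Lemma limK_tw n u : limK D n u -> kerK D n (tw n u).
Proof.
move=> [hd hl]; split.
  by move=> i r h; apply/(@tw_closed n (fun i r (y : A i r) => donK y) (@donKN)); apply: hd.
move=> i r h; apply: recI_pm (hl i r h).
case: (tw_diff n (tw n u) i r); rewrite !twK => ->; [left | right] => //.
by rewrite opprK.
Qed.

Lemma kerK_tw n u : kerK D n u -> limK D n (tw n u).
Proof.
move=> [hd hl]; split.
  by move=> i r h; apply/(@tw_closed n (fun i r (y : A i r) => donK y) (@donKN)); apply: hd.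
move=> i r h; apply: recI_pm (hl i r h).
exact: tw_diff.
Qed.

Lemma part4 n : exists h, sq_iso (limK D n) (limI D n) (kerK D n) (kerI D n) h.
Proof.
exists (tw n); split.
- split.
  + by move=> x; apply: limK_tw.
  + move=> x y _ _; apply: limI_zero => i r.
    rewrite /csub /cadd /copp; apply/eqP; rewrite subr_eq0; apply/eqP.
    by rewrite /tw /cadd; case: ifP => _ //; apply: opprD.
  + move=> a x _; apply: limI_zero => i r.
    rewrite /csub /cadd /copp; apply/eqP; rewrite subr_eq0; apply/eqP.
    by rewrite /tw /cscale; case: ifP => _ //; rewrite scalerN.
  + by move=> x _ hl; apply/limI_tw.
- by move=> x _ /limI_tw.
- move=> y hy; exists (tw n y); split; first exact: kerK_tw.
  by apply: limI_zero => i r; rewrite /csub /cadd /copp twK subrr.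
Qed.

Lemma prodRecI_zero m u : (forall i r, u i r = 0) -> prodRecI D m u.
Proof. by move=> h i r _; rewrite h; apply: recI0. Qed.

Definition gmap (u : chain) : chain := shift2 (fun i r => dV i (r + 1) (u i (r + 1))).

Lemma part3 n : exists g, sq_iso (limK D n) (limI D n) (limRK D n) (limRI D n) g.
Proof.
exists gmap; split.
- split.
  + move=> u [hd hl]; split.
      move=> i r h; have [i0 Ei] := ex_pred i; have [r0 Er] := ex_pred r; subst i r.
      rewrite /gmap shift2E; split; last exact: dvv.
      by apply: hd; lia.
    move=> i r h; exists (u (i + 1) (r + 1)); split.
    * by apply: hd.
    * by rewrite /gmap shift2E subrr; apply: recI0.
    * rewrite /gmap shift2E -opprB; apply: recIN; apply: hl; lia.
  + move=> x y _ _; apply: prodRecI_zero => i r.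
    rewrite /csub /cadd /copp /gmap; have [i0 Ei] := ex_pred i; have [r0 Er] := ex_pred r; subst i r.
    rewrite !shift2E /cadd dVD; exact (subrr _).
  + move=> a x _; apply: prodRecI_zero => i r.
    rewrite /csub /cadd /copp /cscale /gmap; have [i0 Ei] := ex_pred i; have [r0 Er] := ex_pred r; subst i r.
    rewrite !shift2E dVZ; exact (subrr _).
  + move=> u _ hl i r h; have [i0 Ei] := ex_pred i; subst i.
    rewrite /gmap shift2E.
    have [y [z ->]] := hl i0 r (ltac:(lia)).
    by exists z; rewrite dVD dvv add0r dvh.
- move=> u [hd hl] hR i r h; apply: p1a.
  by have := hR (i + 1) r (ltac:(lia)); rewrite /gmap shift2E.
- move=> w [hw hc].
  have Hex : forall i r, exists x : A (i + 1) (r + 1), (i + 1 + 1) + (r + 1) = n + 1 ->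
      donK x /\ recI (i + 1) r (w (i + 1 + 1) (r + 1) - dV (i + 1) (r + 1) x).
    move=> i r; have [e|ne] := eqVneq ((i + 1 + 1) + (r + 1)) (n + 1).
      have [x hx] := p1b (hw _ _ e); by exists x.
    by exists 0 => e; rewrite e eqxx in ne.
  have [xx hxx] := choice2 Hex.
  exists (shift2 xx); split; last first.
    move=> i r h; have [i0 Ei] := ex_pred i; subst i.
    rewrite /csub /cadd /copp /gmap !shift2E -opprB; apply: recIN.
    by have [_ ] := hxx i0 r (ltac:(lia)).
  split.
    move=> i r h; have [i0 Ei] := ex_pred i; have [r0 Er] := ex_pred r; subst i r.
    by rewrite shift2E; have [] := hxx i0 r0 (ltac:(lia)).
  move=> i r h; have [i0 Ei] := ex_pred i; have [r0 Er] := ex_pred r; subst i r.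
  rewrite !shift2E.
  have [_ hB] := hxx i0 (r0 + 1) (ltac:(lia)).
  have [dA hA] := hxx (i0 + 1) r0 (ltac:(lia)).
  have [v [dv1 hv1 hv2]] := hc (i0 + 1) r0 (ltac:(lia)).
  have hd : donI (i0 + 1) r0 (v - xx (i0 + 1) r0).
    apply: p1a; rewrite dVB -(zl2 _ _ (w (i0 + 1 + 1 + 1) (r0 + 1))); exact: recIB hA hv1.
  have hd2 : recI (i0 + 1) (r0 + 1)
      (dH (i0 + 1 + 1) (r0 + 1) v - dH (i0 + 1 + 1) (r0 + 1) (xx (i0 + 1) r0)).
    have [yy [zz e]] := hd; exists yy.
    by rewrite -dHB e dHD dhh addr0.
  rewrite (zl _ _ (dH (i0 + 1 + 1) (r0 + 1) v) (w (i0 + 1 + 1) (r0 + 1 + 1))).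
  by apply: recIB; [apply: recIB|].
Qed.


Lemma part6 n : exists k, sq_iso (cokK D n) (cokI D n) (peekaboo D n) (totB D n) k.
Proof.
exists (fun w => w); split.
- split.
  + move=> w hw; apply: (bicycle_peek (recK_totZ hw) hw).
    by apply: totB_zero => i r; rewrite /csub /cadd /copp; exact (subrr _).
  + by move=> x y _ _; apply: totB_zero => i r; rewrite /csub /cadd /copp; exact (subrr _).
  + by move=> a x _; apply: totB_zero => i r; rewrite /csub /cadd /copp; exact (subrr _).
  + move=> w hw [u [hu hr]].
    have Hex : forall i r, exists z : A i r, (i + 1) + (r + 1) = n ->
        dH (i + 1) r (dV i r z) = w (i + 1) (r + 1) - tdiff (n - 1) u i r.
      move=> i r; have [e|ne] := eqVneq ((i + 1) + (r + 1)) n.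
        have [z hz] := hr i r e; by exists z.
      by exists 0 => e; rewrite e eqxx in ne.
    have [z hz] := choice2 Hex.
    exists (cadd u (shift2 (fun i r => dV i (r + 1) (z i (r + 1))))) => i r h.
    have [i0 Ei] := ex_pred i; have [r0 Er] := ex_pred r; subst i r.
    have e := hz (i0 + 1) (r0 + 1) h.
    move/eqP: e; rewrite eq_sym subr_eq => /eqP ->.
    rewrite /tdiff /cadd !shift2E !dE dvv addr0 addrA; congr (_ + _).
    exact: addrC.
- move=> w hw [Y hY]; exists Y; split.
    move=> i r h; have [i0 Ei] := ex_pred i; subst i.
    have e := hY i0 r (ltac:(lia)).
    have [_ hv] := hw (i0 + 1) (r + 1) (ltac:(lia)).
    by rewrite e /tdiff !dE dvv scaler0 addr0 dvh in hv.
  move=> i r h; rewrite hY //; apply: recI_eq (recI0 _ _); exact (subrr _).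
- move=> y hy; have hz := proj1 hy.
  have [w [hw hb]] := (peek_iff hz).1 hy.
  exists w; split => //; apply: (totB_ext (totB_opp hb)) => i r.
  by rewrite /csub /cadd /copp opprB.
Qed.

End S.

Unset Implicit Arguments.

Theorem corollary6p6 (R : pzRingType) (D : dcomplex R)
    (hcol : columns_exact D) (n : int) :
  (* bar-delta_1 : (A_{i,r})_[] -> ^[]A_{i+1,r} is an isomorphism *)
  ((forall i r (x : dobj D (i + 1) (r + 1)),
      donK x -> recI (i + 1) r (dv D (i + 1) (r + 1) x) -> donI i r x) /\
   (forall i r (w : dobj D (i + 1 + 1) (r + 1)), recK w ->
      exists x : dobj D (i + 1) (r + 1),
        donK x /\ recI (i + 1) r (w - dv D (i + 1) (r + 1) x))) /\
  (* 0 -> PB(H_n) -> H_n -> lim (A_{i,n-i})_[] -> 0 exact *)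
  (exists f : chain D -> chain D,
     [/\ sq_hom (totZ D n) (totB D n) (limK D n) (limI D n) f,
         sq_surj (totZ D n) (limK D n) (limI D n) f &
         forall x, totZ D n x -> (limI D n (f x) <-> peekaboo D n x)]) /\
  (* lim of donors  ~=  lim of receptors ^[]A_{i,n-i+1} *)
  (exists g, sq_iso (limK D n) (limI D n) (limRK D n) (limRI D n) g) /\
  (* lim of donors  ~=  ker (bar-delta : A_{n[]} -> ^[]A_{n+1}) *)
  (exists h, sq_iso (limK D n) (limI D n) (kerK D n) (kerI D n) h) /\
  (* PB(H_n) = image of the intramural map ^[]A_n -> H_n *)
  (forall x, totZ D n x ->
     (peekaboo D n x <-> exists w, prodRecK D n w /\ totB D n (csub x w))) /\
  (* coker (bar-delta : A_{n-1 []} -> ^[]A_n)  ~=  PB(H_n) *)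
  (exists k, sq_iso (cokK D n) (cokI D n) (peekaboo D n) (totB D n) k).
Proof.
split; first split.
- by move=> i r x _ h; apply: p1a.
- by move=> i r w hw; apply: p1b.
split; first exact: part2.
split; first exact: part3.
split; first exact: part4.
split; first by move=> x hz; apply: peek_iff.
exact: part6.
Qed.
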